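(* For every real $\nu>1$, the quantity $c_0(\nu):=2\left(\frac{\Gamma(\nu)}{\sqrt{\pi}}\right)^{\frac{2}{2\nu-1}}$ satisfies $$\frac{2\nu}{e}\left(\frac{2}{e}\right)^{\frac{1}{2\nu-1}}\;<\;c_0(\nu)\;<\;\frac{2\nu}{e}.$$
   Context: $\Gamma$ denotes the Euler Gamma function. *)

(* Defs.v *)
From Stdlib Require Import Reals.
From Coquelicot Require Import Coquelicot.
Open Scope R_scope.

Definition Gamma (x : R) : R :=
  RInt_gen (fun t => Rpower t (x - 1) * exp (- t))
           (at_right 0) (Rbar_locally p_infty).

Definition c0 (nu : R) : R :=
  2 * Rpower (Gamma nu / sqrt PI) (2 / (2 * nu - 1)).

(* Main.v *)
Require Import Defs.
From Stdlib Require Import Reals Lra Lia ZArith.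
From Coquelicot Require Import Coquelicot.
Open Scope R_scope.

Lemma ex_RInt_pos (f : R -> R) u v :
  (forall t, 0 < t -> continuous f t) -> 0 < u -> 0 < v -> ex_RInt f u v.
Proof.
  intros Hc Hu Hv. apply (ex_RInt_continuous (V := R_CompleteNormedModule)).
  intros z Hz. apply Hc.
  destruct Hz as [Hz _]. apply Rlt_le_trans with (2 := Hz).
  unfold Rmin; destruct Rle_dec; lra.
Qed.

Lemma RInt_mono_ends (f : R -> R) (a a' b b' : R) :
  (forall t, 0 < t -> continuous f t) -> (forall t, 0 < t -> 0 <= f t) ->
  0 < a' -> a' <= a -> a <= b -> b <= b' -> RInt f a b <= RInt f a' b'.
Proof.
  intros Hc Hp H1 H2 H3 H4.
  assert (Hex : forall u v, 0 < u -> 0 < v -> ex_RInt f u v).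
  { intros; apply ex_RInt_pos; auto. }
  rewrite <- (RInt_Chasles f a' a b') by (apply Hex; lra).
  rewrite <- (RInt_Chasles f a b b') by (apply Hex; lra).
  unfold plus; simpl.
  assert (0 <= RInt f a' a).
  { apply RInt_ge_0; [lra| apply Hex; lra| intros; apply Hp; lra]. }
  assert (0 <= RInt f b b').
  { apply RInt_ge_0; [lra| apply Hex; lra| intros; apply Hp; lra]. }
  lra.
Qed.

Lemma improper_sup (f : R -> R) (M : R) :
  (forall t, 0 < t -> continuous f t) -> (forall t, 0 < t -> 0 <= f t) ->
  (forall a b, 0 < a <= b -> RInt f a b <= M) ->
  exists l, is_RInt_gen f (at_right 0) (Rbar_locally p_infty) l /\
    (forall a b, 0 < a <= b -> RInt f a b <= l) /\
    (forall eps, 0 < eps -> exists a b, 0 < a <= b /\ l - eps < RInt f a b).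
Proof.
  intros Hc Hp HM.
  set (E := fun y => exists a b, 0 < a <= b /\ y = RInt f a b).
  destruct (completeness E) as [l [Hub Hlub]].
  { exists M. intros y [a [b [Hab ->]]]. now apply HM. }
  { exists (RInt f 1 1). exists 1, 1. split; [lra|reflexivity]. }
  assert (U : forall a b, 0 < a <= b -> RInt f a b <= l).
  { intros a b Hab. apply Hub. exists a, b. split; auto. }
  assert (A : forall eps, 0 < eps -> exists a b, 0 < a <= b /\ l - eps < RInt f a b).
  { intros eps He. apply Classical_Prop.NNPP. intros Hn.
    assert (l <= l - eps); [|lra].
    apply Hlub. intros y [a [b [Hab ->]]].
    apply Rnot_lt_le. intros Hlt. apply Hn. exists a, b. auto. }
  exists l. split; [|split; auto].
  intros P [eps Heps].
  destruct (A eps (cond_pos eps)) as [a0 [b0 [Hab0 Hl0]]].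
  apply Filter_prod with (Q := fun a => 0 < a < a0) (R := fun b => b0 < b).
  - exists (mkposreal a0 (proj1 Hab0)). intros y Hy Hy0.
    unfold ball in Hy; simpl in Hy; unfold AbsRing_ball, abs, minus, plus, opp in Hy; simpl in Hy.
    split; auto. rewrite Ropp_0, Rplus_0_r, Rabs_right in Hy; lra.
  - exists b0. auto.
  - intros a b Ha Hb. simpl. exists (RInt f a b). split.
    + apply (RInt_correct (V := R_CompleteNormedModule)). apply ex_RInt_pos; auto; lra.
    + apply Heps. unfold ball; simpl; unfold AbsRing_ball, abs, minus, plus, opp; simpl.
      assert (H1 : RInt f a0 b0 <= RInt f a b) by (apply RInt_mono_ends; auto; lra).
      assert (H2 : RInt f a b <= l) by (apply U; lra).
      rewrite Rabs_left1; lra.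
Qed.

Definition fG (x t : R) := Rpower t (x - 1) * exp (- t).

Lemma RInt_by_deriv (F f : R -> R) a b : a <= b ->
  (forall t, a <= t <= b -> is_derive F t (f t)) ->
  (forall t, a <= t <= b -> continuous f t) -> RInt f a b = F b - F a.
Proof.
  intros Hab Hd Hc.
  apply (is_RInt_unique (V := R_CompleteNormedModule)).
  apply (is_RInt_derive (V := R_CompleteNormedModule)).
  - intros t Ht. rewrite Rmin_left, Rmax_right in Ht by lra. auto.
  - intros t Ht. rewrite Rmin_left, Rmax_right in Ht by lra. auto.
Qed.

Lemma exp_le_exp_compat x y : x <= y -> exp x <= exp y.
Proof. intros [H|H]; [left; apply exp_increasing; auto| subst; lra]. Qed.

Lemma ln_le_sub1 v : 0 < v -> ln v <= v - 1.
Proof. intros Hv. pose proof (exp_ineq1_le (ln v)). rewrite exp_ln in H; lra. Qed.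

Lemma fG_derive x t : 0 < t ->
  is_derive (fG x) t ((x - 1) / t * fG x t - fG x t).
Proof.
  intros Ht. unfold fG, Rpower. auto_derive; auto. field. lra.
Qed.

Lemma fG_cont x t : 0 < t -> continuous (fG x) t.
Proof. intros Ht. apply (@ex_derive_continuous R_AbsRing R_NormedModule). eexists. apply fG_derive; auto. Qed.

Lemma fG_pos x t : 0 < t -> 0 < fG x t.
Proof. intros Ht. unfold fG, Rpower. apply Rmult_lt_0_compat; apply exp_pos. Qed.

Lemma pow_exp_bound y : exists K, 0 < K /\
  forall t, 1 <= t -> Rpower t y * exp (- t) <= K * exp (- t / 2).
Proof.
  set (c := Rabs y + 1).
  assert (Hc : 0 < c) by (unfold c; pose proof (Rabs_pos y); lra).
  exists (exp (c * ln (2 * c))). split; [apply exp_pos|].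
  intros t Ht. unfold Rpower. rewrite <- !exp_plus. apply exp_le_exp_compat.
  assert (H0 : 0 <= ln t) by (rewrite <- ln_1; apply ln_le; lra).
  assert (H1 : ln (t / (2 * c)) <= t / (2 * c) - 1) by
    (apply ln_le_sub1; apply Rdiv_lt_0_compat; lra).
  rewrite ln_div in H1 by lra.
  assert (H2 : y * ln t <= c * ln t).
  { apply Rmult_le_compat_r; auto. unfold c. pose proof (Rle_abs y). lra. }
  assert (H3 : c * (ln t - ln (2 * c)) <= c * (t / (2 * c) - 1))
    by (apply Rmult_le_compat_l; lra).
  assert (H4 : c * (t / (2 * c)) = t / 2) by (field; lra).
  nra.
Qed.

Lemma fG_int_bound x : 0 < x -> exists M, forall a b, 0 < a <= b -> RInt (fG x) a b <= M.
Proof.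
  intros Hx. destruct (pow_exp_bound (x - 1)) as [K [HK HKb]].
  exists (1 / x + 2 * K). intros a b Hab.
  set (a' := Rmin a 1). set (b' := Rmax b 1).
  assert (Ha' : 0 < a' <= 1) by (unfold a', Rmin; destruct Rle_dec; lra).
  assert (Ha'a : a' <= a) by apply Rmin_l.
  assert (Hb' : 1 <= b') by apply Rmax_r.
  assert (Hbb' : b <= b') by apply Rmax_l.
  apply Rle_trans with (RInt (fG x) a' b').
  { apply RInt_mono_ends; try lra. apply fG_cont. intros; left; apply fG_pos; auto. }
  rewrite <- (RInt_Chasles (fG x) a' 1 b') by (apply ex_RInt_pos; try lra; apply fG_cont).
  unfold plus; simpl.
  assert (I1 : RInt (fG x) a' 1 <= 1 / x).
  { apply Rle_trans with (RInt (fun t => Rpower t (x - 1)) a' 1).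
    - apply RInt_le; try lra.
      + apply ex_RInt_pos; try lra; apply fG_cont.
      + apply ex_RInt_pos; try lra. intros t Ht. apply (@ex_derive_continuous R_AbsRing R_NormedModule).
        unfold Rpower. auto_derive. auto.
      + intros t Ht. unfold fG. rewrite <- (Rmult_1_r (Rpower t (x - 1))) at 2.
        apply Rmult_le_compat_l. unfold Rpower; left; apply exp_pos.
        rewrite <- exp_0. apply exp_le_exp_compat; lra.
    - rewrite (RInt_by_deriv (fun t => Rpower t x / x)); try lra.
      + assert (0 < Rpower a' x / x) by (apply Rdiv_lt_0_compat; auto; apply exp_pos).
        unfold Rpower at 1; rewrite ln_1, Rmult_0_r, exp_0. lra.
      + intros t Ht. unfold Rpower. auto_derive; [lra|].
        replace (x * ln t) with ((x - 1) * ln t + ln t) by ring.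
        rewrite exp_plus, exp_ln by lra. field. split; lra.
      + intros t Ht. apply (@ex_derive_continuous R_AbsRing R_NormedModule).
        unfold Rpower. auto_derive. lra. }
  assert (I2 : RInt (fG x) 1 b' <= 2 * K).
  { apply Rle_trans with (RInt (fun t => K * exp (- t / 2)) 1 b').
    - apply RInt_le; try lra.
      + apply ex_RInt_pos; try lra; apply fG_cont.
      + apply ex_RInt_pos; try lra. intros t Ht. apply (@ex_derive_continuous R_AbsRing R_NormedModule).
        auto_derive. auto.
      + intros t Ht. apply HKb. lra.
    - rewrite (RInt_by_deriv (fun t => - 2 * K * exp (- t / 2))); try lra.
      + assert (0 < exp (- b' / 2)) by apply exp_pos.
        assert (exp (- 1 / 2) <= 1) by (rewrite <- exp_0; apply exp_le_exp_compat; lra).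
        assert (K * exp (- 1 / 2) <= K * 1) by (apply Rmult_le_compat_l; lra).
        assert (0 <= K * exp (- b' / 2)) by (apply Rmult_le_pos; lra).
        assert (E : - (1) / 2 = -1/2) by lra. rewrite E. lra.
      + intros t Ht. auto_derive; auto. unfold Rdiv; field.
      + intros t Ht. apply (@ex_derive_continuous R_AbsRing R_NormedModule).
        auto_derive. auto. }
  lra.
Qed.

Lemma Gamma_spec x : 0 < x ->
  is_RInt_gen (fG x) (at_right 0) (Rbar_locally p_infty) (Gamma x) /\
  (forall a b, 0 < a <= b -> RInt (fG x) a b <= Gamma x) /\
  (forall eps, 0 < eps -> exists a b, 0 < a <= b /\ Gamma x - eps < RInt (fG x) a b).
Proof.
  intros Hx. destruct (fG_int_bound x Hx) as [M HM].
  destruct (improper_sup (fG x) M) as [l [H1 [H2 H3]]]; auto.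
  - intros; apply fG_cont; auto.
  - intros; left; apply fG_pos; auto.
  - assert (E : Gamma x = l).
    { unfold Gamma. change (fun t => Rpower t (x - 1) * exp (- t)) with (fG x).
      apply is_RInt_gen_unique; auto. }
    rewrite E. auto.
Qed.


Lemma le_eps u v : (forall eps, 0 < eps -> u <= v + eps) -> u <= v.
Proof.
  intros H. destruct (Rle_or_lt u v) as [|Hlt]; auto.
  specialize (H ((u - v) / 2)). lra.
Qed.

Lemma RInt_lin (f g : R -> R) u v a b : 0 < a -> 0 < b ->
  (forall t, 0 < t -> continuous f t) -> (forall t, 0 < t -> continuous g t) ->
  RInt (fun t => u * f t + v * g t) a b = u * RInt f a b + v * RInt g a b.
Proof.
  intros Ha Hb Hf Hg.
  apply (is_RInt_unique (V := R_CompleteNormedModule)).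
  apply (is_RInt_plus (V := R_NormedModule) (fun t => u * f t) (fun t => v * g t)).
  - apply (is_RInt_scal (V := R_NormedModule) f).
    apply (RInt_correct (V := R_CompleteNormedModule)). apply ex_RInt_pos; auto.
  - apply (is_RInt_scal (V := R_NormedModule) g).
    apply (RInt_correct (V := R_CompleteNormedModule)). apply ex_RInt_pos; auto.
Qed.

Lemma fG_cont' x : forall t, 0 < t -> continuous (fG x) t.
Proof. intros; apply fG_cont; auto. Qed.

Lemma fG_pos' x : forall t, 0 < t -> 0 <= fG x t.
Proof. intros; left; apply fG_pos; auto. Qed.

Lemma Gamma_pos x : 0 < x -> 0 < Gamma x.
Proof.
  intros Hx. destruct (Gamma_spec x Hx) as [_ [U _]].
  set (c := exp (- Rabs (x - 1) * ln 2 - 2)).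
  assert (Hc : 0 < c) by apply exp_pos.
  apply Rlt_le_trans with (RInt (fun _ => c) 1 2).
  - rewrite RInt_const. unfold scal; simpl; unfold mult; simpl. lra.
  - apply Rle_trans with (RInt (fG x) 1 2); [|apply U; lra].
    apply RInt_le; try lra.
    + apply (ex_RInt_continuous (V := R_CompleteNormedModule)). intros; apply continuous_const.
    + apply ex_RInt_pos; try lra; apply fG_cont'.
    + intros t Ht. unfold c, fG, Rpower. rewrite <- exp_plus. apply exp_le_exp_compat.
      assert (0 <= ln t) by (rewrite <- ln_1; apply ln_le; lra).
      assert (ln t <= ln 2) by (apply ln_le; lra).
      assert (- Rabs (x - 1) * ln t <= (x - 1) * ln t).
      { destruct (Rle_or_lt 0 (x - 1)).
        - rewrite Rabs_right by lra. nra.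
        - rewrite Rabs_left by lra. nra. }
      assert (Rabs (x - 1) * ln t <= Rabs (x - 1) * ln 2)
        by (apply Rmult_le_compat_l; auto; apply Rabs_pos).
      lra.
Qed.

Lemma fG_parts x a b : 0 < x -> 0 < a <= b ->
  RInt (fG (x + 1)) a b = x * RInt (fG x) a b + Rpower a x * exp (- a) - Rpower b x * exp (- b).
Proof.
  intros Hx Hab.
  assert (E : RInt (fun t => 1 * fG (x + 1) t + (- x) * fG x t) a b
              = (- Rpower b x * exp (- b)) - (- Rpower a x * exp (- a))).
  { apply (RInt_by_deriv (fun t => - Rpower t x * exp (- t))); try lra.
    - intros t Ht. unfold fG, Rpower. auto_derive; [lra|].
      replace (x * ln t) with ((x - 1) * ln t + ln t) by ring.
      replace ((x + 1 - 1) * ln t) with ((x - 1) * ln t + ln t) by ring.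
      rewrite exp_plus, exp_ln by lra. field. lra.
    - intros t Ht. apply (@ex_derive_continuous R_AbsRing R_NormedModule).
      unfold fG, Rpower. auto_derive; lra. }
  rewrite RInt_lin in E by (lra || apply fG_cont'). lra.
Qed.

Lemma Gamma_succ x : 0 < x -> Gamma (x + 1) = x * Gamma x.
Proof.
  intros Hx.
  destruct (Gamma_spec x Hx) as [_ [U1 A1]].
  assert (Hx1 : 0 < x + 1) by lra.
  destruct (Gamma_spec (x + 1) Hx1) as [_ [U2 A2]].
  destruct (pow_exp_bound x) as [K [HK HKb]].
  apply Rle_antisym.
  - apply le_eps. intros eps He.
    apply Rnot_lt_le. intros Hlt.
    destruct (A2 (Gamma (x + 1) - (x * Gamma x + eps))) as [a [b [Hab Hr]]]; [lra|].
    set (a' := Rmin a (Rpower eps (1 / x) / 2)).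
    assert (Hpe : 0 < Rpower eps (1 / x)) by apply exp_pos.
    assert (Ha' : 0 < a' <= a).
    { unfold a', Rmin; destruct Rle_dec; lra. }
    assert (Ha'2 : a' < Rpower eps (1 / x)).
    { unfold a', Rmin; destruct Rle_dec; lra. }
    assert (H1 : RInt (fG (x + 1)) a b <= RInt (fG (x + 1)) a' b)
      by (apply RInt_mono_ends; try lra; [apply fG_cont'|apply fG_pos']).
    rewrite (fG_parts x a' b) in H1 by lra.
    assert (H2 : RInt (fG x) a' b <= Gamma x) by (apply U1; lra).
    assert (H3 : Rpower a' x < eps).
    { replace eps with (Rpower (Rpower eps (1 / x)) x).
      - apply Rlt_Rpower_l; lra.
      - rewrite Rpower_mult. replace (1 / x * x) with 1 by (field; lra).
        apply Rpower_1; lra. }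
    assert (H4 : Rpower a' x * exp (- a') <= Rpower a' x).
    { rewrite <- (Rmult_1_r (Rpower a' x)) at 2. apply Rmult_le_compat_l.
      left; apply exp_pos. rewrite <- exp_0. apply exp_le_exp_compat; lra. }
    assert (H5 : 0 <= Rpower b x * exp (- b)) by (apply Rmult_le_pos; left; apply exp_pos).
    assert (H6 : x * RInt (fG x) a' b <= x * Gamma x) by (apply Rmult_le_compat_l; lra).
    lra.
  - apply le_eps. intros eps0 He0.
    set (eps := eps0 / (x + 1)).
    assert (He : 0 < eps) by (unfold eps; apply Rdiv_lt_0_compat; lra).
    destruct (A1 eps He) as [a [b [Hab Hr]]].
    set (b' := Rmax (Rmax b (2 * K / eps)) 1).
    assert (Hb' : b <= b') by (unfold b'; pose proof (Rmax_l b (2 * K / eps)); pose proof (Rmax_l (Rmax b (2 * K / eps)) 1); lra).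
    assert (Hb'2 : 2 * K / eps <= b') by (unfold b'; pose proof (Rmax_r b (2 * K / eps)); pose proof (Rmax_l (Rmax b (2 * K / eps)) 1); lra).
    assert (H1 : RInt (fG x) a b <= RInt (fG x) a b')
      by (apply RInt_mono_ends; try lra; [apply fG_cont'|apply fG_pos']).
    assert (H2 : RInt (fG (x + 1)) a b' <= Gamma (x + 1)) by (apply U2; lra).
    rewrite fG_parts in H2 by lra.
    assert (H3 : 0 <= Rpower a x * exp (- a)) by (apply Rmult_le_pos; left; apply exp_pos).
    assert (Hb1 : 1 <= b').
    { apply Rmax_r. }
    assert (H4 : Rpower b' x * exp (- b') <= eps).
    { apply Rle_trans with (K * exp (- b' / 2)); [apply HKb; lra|].
      assert (E1 : 1 + b' / 2 <= exp (b' / 2)) by apply exp_ineq1_le.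
      assert (E2 : exp (- b' / 2) * exp (b' / 2) = 1).
      { rewrite <- exp_plus. replace (- b' / 2 + b' / 2) with 0 by field. apply exp_0. }
      assert (E3 : 0 < exp (- b' / 2)) by apply exp_pos.
      assert (E4 : 2 * K <= eps * b').
      { apply Rmult_le_reg_r with (/ eps). apply Rinv_0_lt_compat; lra.
        replace (eps * b' * / eps) with b' by (field; lra). unfold Rdiv in Hb'2. lra. }
      nra. }
    assert (H6 : x * (Gamma x - eps) <= x * RInt (fG x) a b') by (apply Rmult_le_compat_l; lra).
    assert (E : eps0 = (x + 1) * eps) by (unfold eps; field; lra).
    nra.
Qed.

Lemma Gamma_one : Gamma 1 = 1.
Proof.
  assert (H0 : 0 < 1) by lra.
  destruct (Gamma_spec 1 H0) as [_ [U A]].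
  assert (E : forall a b, 0 < a <= b -> RInt (fG 1) a b = exp (- a) - exp (- b)).
  { intros a b Hab.
    rewrite (RInt_by_deriv (fun t => - exp (- t))); try lra.
    - intros t Ht. unfold fG, Rpower. auto_derive; auto.
      replace (1 - 1) with 0 by ring. rewrite Rmult_0_l, exp_0. ring.
    - intros t Ht. apply fG_cont. lra. }
  apply Rle_antisym.
  - apply Rnot_lt_le. intros Hlt.
    destruct (A (Gamma 1 - 1)) as [a [b [Hab Hr]]]; [lra|].
    rewrite E in Hr by auto.
    assert (exp (- a) <= 1) by (rewrite <- exp_0; apply exp_le_exp_compat; lra).
    assert (0 < exp (- b)) by apply exp_pos. lra.
  - apply le_eps. intros eps He.
    set (a := eps / 2). set (b := a + 2 / eps).
    assert (Ha : 0 < a) by (unfold a; lra).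
    assert (Hb2 : 0 < 2 / eps) by (apply Rdiv_lt_0_compat; lra).
    assert (H1 : RInt (fG 1) a b <= Gamma 1) by (apply U; unfold b; lra).
    rewrite E in H1 by (unfold b; lra).
    assert (H2 : 1 + - a <= exp (- a)) by apply exp_ineq1_le.
    assert (H3 : 1 + b <= exp b) by apply exp_ineq1_le.
    assert (H4 : exp (- b) * exp b = 1).
    { rewrite <- exp_plus. replace (- b + b) with 0 by ring. apply exp_0. }
    assert (H5 : 0 < exp (- b)) by apply exp_pos.
    assert (H6 : eps * (2 / eps) = 2) by (field; lra).
    assert (H7 : exp (- b) * b <= 1) by nra.
    assert (H8 : exp (- b) <= eps / 2).
    { assert (2 / eps <= b) by (unfold b; lra). nra. }
    unfold a in *. lra.
Qed.

Lemma exp_convex th al be : 0 <= th <= 1 ->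
  exp (th * al + (1 - th) * be) <= th * exp al + (1 - th) * exp be.
Proof.
  intros Hth. set (m := th * al + (1 - th) * be).
  assert (Ha : exp m * (1 + (al - m)) <= exp al).
  { replace al with (m + (al - m)) at 2 by ring. rewrite exp_plus.
    apply Rmult_le_compat_l; [left; apply exp_pos| apply exp_ineq1_le]. }
  assert (Hb : exp m * (1 + (be - m)) <= exp be).
  { replace be with (m + (be - m)) at 2 by ring. rewrite exp_plus.
    apply Rmult_le_compat_l; [left; apply exp_pos| apply exp_ineq1_le]. }
  assert (E : th * (exp m * (1 + (al - m))) + (1 - th) * (exp m * (1 + (be - m))) = exp m)
    by (unfold m; ring).
  assert (th * (exp m * (1 + (al - m))) <= th * exp al) by (apply Rmult_le_compat_l; lra).
  assert ((1 - th) * (exp m * (1 + (be - m))) <= (1 - th) * exp be) by (apply Rmult_le_compat_l; lra).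
  lra.
Qed.

Lemma Gamma_logconvex p q th : 0 < p -> 0 < q -> 0 <= th <= 1 ->
  ln (Gamma (th * p + (1 - th) * q)) <= th * ln (Gamma p) + (1 - th) * ln (Gamma q).
Proof.
  intros Hp Hq Hth.
  set (r := th * p + (1 - th) * q).
  assert (Hr : 0 < r).
  { unfold r. destruct (Rle_lt_or_eq_dec 0 th (proj1 Hth)) as [H|H].
    - assert (0 < th * p) by (apply Rmult_lt_0_compat; lra).
      assert (0 <= (1 - th) * q) by (apply Rmult_le_pos; lra). lra.
    - subst th. lra. }
  pose proof (Gamma_pos p Hp) as GA. pose proof (Gamma_pos q Hq) as GB.
  pose proof (Gamma_pos r Hr) as GR.
  destruct (Gamma_spec p Hp) as [_ [Up _]].
  destruct (Gamma_spec q Hq) as [_ [Uq _]].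
  destruct (Gamma_spec r Hr) as [_ [_ Ar]].
  set (C := exp (th * ln (Gamma p) + (1 - th) * ln (Gamma q))).
  assert (HC : 0 < C) by apply exp_pos.
  assert (Key : forall a b, 0 < a <= b -> RInt (fG r) a b <= C).
  { intros a b Hab.
    apply Rle_trans with (RInt (fun t => (C * th / Gamma p) * fG p t + (C * (1 - th) / Gamma q) * fG q t) a b).
    - apply RInt_le; try lra.
      + apply ex_RInt_pos; try lra; apply fG_cont'.
      + apply (ex_RInt_continuous (V := R_CompleteNormedModule)). intros z Hz.
        apply (@ex_derive_continuous R_AbsRing R_NormedModule).
        assert (0 < z).
        { destruct Hz as [Hz _]. apply Rlt_le_trans with (2 := Hz).
          unfold Rmin; destruct Rle_dec; lra. }
        unfold fG, Rpower. auto_derive. lra.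
      + intros t Ht. assert (Ht0 : 0 < t) by lra.
        set (al := (p - 1) * ln t + - t - ln (Gamma p)).
        set (be := (q - 1) * ln t + - t - ln (Gamma q)).
        assert (Hc := exp_convex th al be Hth).
        assert (E1 : fG r t = C * exp (th * al + (1 - th) * be)).
        { unfold fG, Rpower, C. rewrite <- !exp_plus. f_equal. unfold al, be, r. ring. }
        assert (E2 : fG p t = Gamma p * exp al).
        { unfold fG, Rpower, al. rewrite <- (exp_ln (Gamma p)) at 1 by lra.
          rewrite <- !exp_plus. f_equal. ring. }
        assert (E3 : fG q t = Gamma q * exp be).
        { unfold fG, Rpower, be. rewrite <- (exp_ln (Gamma q)) at 1 by lra.
          rewrite <- !exp_plus. f_equal. ring. }
        rewrite E1, E2, E3.
        replace (C * th / Gamma p * (Gamma p * exp al) + C * (1 - th) / Gamma q * (Gamma q * exp be))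
          with (C * (th * exp al + (1 - th) * exp be)) by (field; lra).
        apply Rmult_le_compat_l; lra.
    - rewrite RInt_lin by (lra || apply fG_cont').
      assert (H1 : RInt (fG p) a b <= Gamma p) by (apply Up; lra).
      assert (H2 : RInt (fG q) a b <= Gamma q) by (apply Uq; lra).
      assert (H3 : C * th / Gamma p * RInt (fG p) a b <= C * th / Gamma p * Gamma p).
      { apply Rmult_le_compat_l; auto. apply Rmult_le_pos; [apply Rmult_le_pos; lra|].
        left; apply Rinv_0_lt_compat; lra. }
      assert (H4 : C * (1 - th) / Gamma q * RInt (fG q) a b <= C * (1 - th) / Gamma q * Gamma q).
      { apply Rmult_le_compat_l; auto. apply Rmult_le_pos; [apply Rmult_le_pos; lra|].
        left; apply Rinv_0_lt_compat; lra. }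
      replace (C * th / Gamma p * Gamma p) with (C * th) in H3 by (field; lra).
      replace (C * (1 - th) / Gamma q * Gamma q) with (C * (1 - th)) in H4 by (field; lra).
      lra. }
  assert (HG : Gamma r <= C).
  { apply Rnot_lt_le. intros Hlt.
    destruct (Ar (Gamma r - C)) as [a [b [Hab Hrr]]]; [lra|].
    specialize (Key a b Hab). lra. }
  unfold C in HG. rewrite <- (ln_exp (th * ln (Gamma p) + (1 - th) * ln (Gamma q))).
  fold r. apply ln_le; auto.
Qed.

Lemma atanh_lower z : 0 < z < 1 -> 2 * z < ln (1 + z) - ln (1 - z).
Proof.
  intros Hz.
  set (g := fun t => ln (1 + t) - ln (1 - t) - 2 * t).
  destruct (MVT_cor2 g (fun t => / (1 + t) + / (1 - t) - 2) 0 z) as [c [Hc1 Hc2]]; try lra.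
  - intros c Hc. apply is_derive_Reals. unfold g. auto_derive; [lra|]. field; lra.
  - unfold g in Hc1. rewrite Rplus_0_r, Rminus_0_r, ln_1 in Hc1.
    assert (/ (1 + c) + / (1 - c) - 2 = 2 * c * c / ((1 + c) * (1 - c))) by (field; lra).
    assert (0 < 2 * c * c / ((1 + c) * (1 - c))).
    { apply Rdiv_lt_0_compat; nra. }
    nra.
Qed.

Lemma atanh_upper z : 0 < z < 1 ->
  ln (1 + z) - ln (1 - z) < 2 * z + 2 * z ^ 3 / (3 * (1 - z ^ 2)).
Proof.
  intros Hz.
  set (h := fun t => 2 * t + 2 * t ^ 3 / (3 * (1 - t ^ 2)) - ln (1 + t) + ln (1 - t)).
  destruct (MVT_cor2 h (fun t => 4 / 3 * t ^ 4 / (1 - t ^ 2) ^ 2) 0 z) as [c [Hc1 Hc2]]; try lra.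
  - intros c Hc. apply is_derive_Reals. unfold h.
    assert (1 - c ^ 2 <> 0) by nra.
    assert (c * c < 1) by nra.
    auto_derive; [repeat split; try lra|]. field. repeat split; try lra.
  - unfold h in Hc1.
    replace (2 * 0 + 2 * 0 ^ 3 / (3 * (1 - 0 ^ 2)) - ln (1 + 0) + ln (1 - 0)) with 0 in Hc1
      by (rewrite Rplus_0_r, Rminus_0_r, ln_1; field).
    assert (0 < 4 / 3 * c ^ 4 / (1 - c ^ 2) ^ 2).
    { apply Rdiv_lt_0_compat; [|apply pow_lt; nra]. assert (0 < c ^ 4) by (apply pow_lt; lra). lra. }
    assert (0 < 4 / 3 * c ^ 4 / (1 - c ^ 2) ^ 2 * (z - 0)) by (apply Rmult_lt_0_compat; lra).
    lra.
Qed.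

Definition dd (y : R) := (y + / 2) * (ln (y + 1) - ln y) - 1.

Lemma dd_bounds y : 0 < y -> 0 < dd y < / (12 * y) - / (12 * (y + 1)).
Proof.
  intros Hy. set (z := / (2 * y + 1)).
  assert (Hz : 0 < z < 1).
  { unfold z. split. apply Rinv_0_lt_compat; lra.
    rewrite <- Rinv_1. apply Rinv_lt_contravar; lra. }
  assert (E : ln (y + 1) - ln y = ln (1 + z) - ln (1 - z)).
  { rewrite <- !ln_div by lra. f_equal. unfold z. field. lra. }
  assert (Ey : y + / 2 = / (2 * z)) by (unfold z; field; lra).
  pose proof (atanh_lower z Hz). pose proof (atanh_upper z Hz).
  unfold dd. rewrite E, Ey. split.
  - apply Rmult_lt_reg_l with (2 * z); [lra|].
    replace (2 * z * (/ (2 * z) * (ln (1 + z) - ln (1 - z)) - 1))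
      with (ln (1 + z) - ln (1 - z) - 2 * z) by (field; lra). lra.
  - replace (/ (12 * y) - / (12 * (y + 1))) with (z ^ 2 / (3 * (1 - z ^ 2))).
    + apply Rmult_lt_reg_l with (2 * z); [lra|].
      replace (2 * z * (/ (2 * z) * (ln (1 + z) - ln (1 - z)) - 1))
        with (ln (1 + z) - ln (1 - z) - 2 * z) by (field; lra).
      replace (2 * z * (z ^ 2 / (3 * (1 - z ^ 2)))) with (2 * z ^ 3 / (3 * (1 - z ^ 2)))
        by (field; nra). lra.
    + assert (Ez : 1 - z ^ 2 = 4 * y * (y + 1) * z ^ 2) by (unfold z; field; lra).
      rewrite Ez. field. repeat split; lra.
Qed.

Definition LG (y : R) := ln (Gamma y) - (y - / 2) * ln y + y.

Lemma lnGamma_succ y : 0 < y -> ln (Gamma (y + 1)) = ln y + ln (Gamma y).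
Proof.
  intros Hy. rewrite Gamma_succ by auto. apply ln_mult; auto. apply Gamma_pos; auto.
Qed.

Lemma LG_step y : 0 < y -> LG y - LG (y + 1) = dd y.
Proof.
  intros Hy. unfold LG, dd. rewrite lnGamma_succ by auto.
  replace (y + 1 - / 2) with (y + / 2) by field. field.
Qed.

Lemma LG_tele y : 0 < y -> forall m : nat,
  0 <= LG y - LG (y + INR m) <= / (12 * y) - / (12 * (y + INR m)) /\
  ((1 <= m)%nat -> dd y <= LG y - LG (y + INR m)).
Proof.
  intros Hy m. induction m as [|m [IH1 IH2]].
  - simpl. rewrite Rplus_0_r. split; [lra|]. intros H; inversion H.
  - assert (Hm : 0 <= INR m) by apply pos_INR.
    rewrite S_INR.
    assert (E : LG y - LG (y + (INR m + 1)) = (LG y - LG (y + INR m)) + dd (y + INR m)).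
    { rewrite <- LG_step by lra. replace (y + (INR m + 1)) with (y + INR m + 1) by ring. ring. }
    rewrite E. pose proof (dd_bounds (y + INR m)) as Hd.
    replace (y + INR m + 1) with (y + (INR m + 1)) in Hd by ring.
    split; [split; lra|].
    intros _. destruct m as [|m].
    + simpl. rewrite Rplus_0_r. lra.
    + assert (dd y <= LG y - LG (y + INR (S m))) by (apply IH2; lia). lra.
Qed.

Lemma LG_sandwich N th : 1 <= N -> 0 <= th <= 1 ->
  Rabs (LG (N + th) - LG N) <= / (2 * N).
Proof.
  intros HN Hth.
  assert (HNt : 0 < N + th) by lra.
  assert (C1 : ln (Gamma (N + th)) <= th * ln (Gamma (N + 1)) + (1 - th) * ln (Gamma N)).
  { replace (N + th) with (th * (N + 1) + (1 - th) * N) at 1 by ring.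
    apply Gamma_logconvex; lra. }
  assert (C2 : ln (Gamma (N + 1)) <= th * ln (Gamma (N + th)) + (1 - th) * ln (Gamma (N + th + 1))).
  { replace (N + 1) with (th * (N + th) + (1 - th) * (N + th + 1)) at 1 by ring.
    apply Gamma_logconvex; lra. }
  rewrite lnGamma_succ in C1, C2 by lra.
  rewrite (lnGamma_succ (N + th)) in C2 by lra.
  replace (th * (ln N + ln (Gamma N)) + (1 - th) * ln (Gamma N)) with
    (ln (Gamma N) + th * ln N) in C1 by ring.
  replace (th * ln (Gamma (N + th)) + (1 - th) * (ln (N + th) + ln (Gamma (N + th)))) with
    (ln (Gamma (N + th)) + (1 - th) * ln (N + th)) in C2 by ring.
  set (l := ln (N + th) - ln N).
  assert (Hl1 : l <= th / N).
  { unfold l. rewrite <- ln_div by lra.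
    pose proof (ln_le_sub1 ((N + th) / N)).
    replace ((N + th) / N - 1) with (th / N) in H by (field; lra). apply H.
    apply Rdiv_lt_0_compat; lra. }
  assert (Hl2 : th / (N + th) <= l).
  { unfold l. pose proof (ln_le_sub1 (N / (N + th))).
    rewrite ln_div in H by lra.
    replace (N / (N + th) - 1) with (- (th / (N + th))) in H by (field; lra).
    assert (0 < N / (N + th)) by (apply Rdiv_lt_0_compat; lra). lra. }
  unfold LG. apply Rabs_le. split.
  -
    assert (LB : ln (Gamma (N + th)) - ln (Gamma N) >= ln N - (1 - th) * ln (N + th)) by lra.
    assert (H1 : (N + / 2) * l <= (N + / 2) * (th / N)) by (apply Rmult_le_compat_l; lra).
    replace ((N + / 2) * (th / N)) with (th + th / (2 * N)) in H1 by (field; lra).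
    assert (H2 : th / (2 * N) <= / (2 * N)).
    { unfold Rdiv. rewrite <- (Rmult_1_l (/ (2 * N))) at 2. apply Rmult_le_compat_r; [|lra].
      left; apply Rinv_0_lt_compat; lra. }
    unfold l in H1. nra.
  - assert (H1 : (N + th - / 2) * (th / (N + th)) <= (N + th - / 2) * l)
      by (apply Rmult_le_compat_l; lra).
    replace ((N + th - / 2) * (th / (N + th))) with (th - th / (2 * (N + th))) in H1 by (field; lra).
    assert (H2 : th / (2 * (N + th)) <= / (2 * N)).
    { apply Rle_trans with (1 / (2 * N)); [|lra].
      apply Rmult_le_compat; try lra.
      - left; apply Rinv_0_lt_compat; lra.
      - apply Rinv_le_contravar; lra. }
    unfold l in H1. nra.
Qed.

Definition W (n : nat) := RInt (fun t => sin t ^ n) 0 (PI / 2).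

Lemma sinpow_cont n t : continuous (fun t => sin t ^ n) t.
Proof. apply (@ex_derive_continuous R_AbsRing R_NormedModule). auto_derive. auto. Qed.

Lemma RInt_lin_all (f g : R -> R) u v a b :
  (forall t, continuous f t) -> (forall t, continuous g t) ->
  RInt (fun t => u * f t + v * g t) a b = u * RInt f a b + v * RInt g a b.
Proof.
  intros Hf Hg.
  apply (is_RInt_unique (V := R_CompleteNormedModule)).
  apply (is_RInt_plus (V := R_NormedModule) (fun t => u * f t) (fun t => v * g t)).
  - apply (is_RInt_scal (V := R_NormedModule) f).
    apply (RInt_correct (V := R_CompleteNormedModule)).
    apply (ex_RInt_continuous (V := R_CompleteNormedModule)); auto.
  - apply (is_RInt_scal (V := R_NormedModule) g).
    apply (RInt_correct (V := R_CompleteNormedModule)).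
    apply (ex_RInt_continuous (V := R_CompleteNormedModule)); auto.
Qed.

Lemma PI2_pos : 0 < PI / 2.
Proof. pose proof PI_RGT_0. lra. Qed.

Lemma W0 : W 0 = PI / 2.
Proof. unfold W. simpl. rewrite RInt_const. unfold scal; simpl; unfold mult; simpl. ring. Qed.

Lemma W1 : W 1 = 1.
Proof.
  unfold W. pose proof PI2_pos.
  rewrite (RInt_by_deriv (fun t => - cos t)); try lra.
  - rewrite cos_PI2, cos_0. lra.
  - intros t Ht. auto_derive; auto. simpl; lra.
  - intros t Ht. apply sinpow_cont.
Qed.

Lemma W_rec n : INR (S (S n)) * W (S (S n)) = INR (S n) * W n.
Proof.
  pose proof PI2_pos.
  assert (E : RInt (fun t => INR (S (S n)) * sin t ^ (S (S n)) + (- INR (S n)) * sin t ^ n) 0 (PI / 2) = 0).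
  { rewrite (RInt_by_deriv (fun t => - cos t * sin t ^ (S n))); try lra.
    - rewrite cos_PI2, sin_0. simpl. ring.
    - intros t Ht. auto_derive; auto.
      change (match n with 0%nat => 1 | S _ => INR n + 1 end) with (INR (S n)).
      rewrite !S_INR. simpl.
      assert (E : cos t * cos t = 1 - sin t * sin t) by (pose proof (cos2 t); unfold Rsqr in H0; lra).
      replace (- (1 * - sin t) * (sin t * sin t ^ n) + - cos t * (1 * cos t * ((INR n + 1) * sin t ^ n))) with
        (sin t * sin t * sin t ^ n - (cos t * cos t) * (INR n + 1) * sin t ^ n) by ring.
      rewrite E. ring.
    - intros t Ht. apply (@ex_derive_continuous R_AbsRing R_NormedModule). auto_derive. auto. }
  rewrite RInt_lin_all in E by (intros; apply sinpow_cont).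
  unfold W. lra.
Qed.

Lemma W_decr n : W (S n) <= W n.
Proof.
  pose proof PI2_pos. unfold W. apply RInt_le; try lra.
  - apply (ex_RInt_continuous (V := R_CompleteNormedModule)); intros; apply sinpow_cont.
  - apply (ex_RInt_continuous (V := R_CompleteNormedModule)); intros; apply sinpow_cont.
  - intros t Ht. simpl.
    assert (0 <= sin t) by (apply sin_ge_0; lra).
    assert (sin t <= 1) by apply SIN_bound.
    assert (0 <= sin t ^ n) by (apply pow_le; auto).
    nra.
Qed.

Lemma W_pos n : 0 < W n /\ 0 < W (S n).
Proof.
  induction n as [|n [IH1 IH2]].
  - rewrite W0, W1. pose proof PI2_pos. lra.
  - split; auto. pose proof (W_rec n).
    assert (0 < INR (S (S n))) by (apply lt_0_INR; lia).
    assert (0 < INR (S n)) by (apply lt_0_INR; lia).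
    assert (0 < INR (S n) * W n) by (apply Rmult_lt_0_compat; lra).
    nra.
Qed.

Lemma INR2 n : INR (2 * n) = 2 * INR n.
Proof. rewrite mult_INR. simpl. ring. Qed.

Lemma WA n : W (2 * S n) = (2 * INR n + 1) / (2 * INR n + 2) * W (2 * n).
Proof.
  replace (2 * S n)%nat with (S (S (2 * n))) by lia.
  pose proof (W_rec (2 * n)) as R. rewrite !S_INR, INR2 in R.
  assert (0 <= INR n) by apply pos_INR.
  apply Rmult_eq_reg_l with (2 * INR n + 1 + 1); [|lra].
  rewrite R. field. lra.
Qed.

Lemma WB n : W (S (2 * S n)) = (2 * INR n + 2) / (2 * INR n + 3) * W (S (2 * n)).
Proof.
  replace (S (2 * S n))%nat with (S (S (S (2 * n)))) by lia.
  pose proof (W_rec (S (2 * n))) as R. rewrite !S_INR, INR2 in R.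
  assert (0 <= INR n) by apply pos_INR.
  apply Rmult_eq_reg_l with (2 * INR n + 3); [|lra].
  replace (2 * INR n + 3) with (2 * INR n + 1 + 1 + 1) by ring. rewrite R. field. lra.
Qed.

Lemma W_closed n :
  W (2 * n) * 4 ^ n * Gamma (INR n + 1) ^ 2 = PI / 2 * Gamma (2 * INR n + 1) /\
  W (S (2 * n)) * Gamma (2 * INR n + 2) = 4 ^ n * Gamma (INR n + 1) ^ 2.
Proof.
  induction n as [|n [IHA IHB]].
  - simpl. rewrite Rmult_0_r, Rplus_0_l. rewrite Gamma_one, W0, W1.
    replace (0 + 2) with (1 + 1) by ring. rewrite Gamma_succ, Gamma_one by lra. split; ring.
  - rewrite WA, WB. 
    set (N := INR n). assert (HN : 0 <= N) by apply pos_INR.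
    rewrite S_INR. fold N. fold N in IHA, IHB.
    assert (G1 : Gamma (N + 1 + 1) = (N + 1) * Gamma (N + 1)) by (apply Gamma_succ; lra).
    assert (G2 : Gamma (2 * N + 2) = (2 * N + 1) * Gamma (2 * N + 1)).
    { replace (2 * N + 2) with (2 * N + 1 + 1) by ring. apply Gamma_succ; lra. }
    assert (G3 : Gamma (2 * (N + 1) + 1) = (2 * N + 2) * Gamma (2 * N + 2)).
    { replace (2 * (N + 1) + 1) with (2 * N + 2 + 1) by ring. apply Gamma_succ; lra. }
    assert (G4 : Gamma (2 * (N + 1) + 2) = (2 * N + 3) * Gamma (2 * N + 3)).
    { replace (2 * (N + 1) + 2) with (2 * N + 3 + 1) by ring. apply Gamma_succ; lra. }
    assert (G5 : Gamma (2 * N + 3) = (2 * N + 2) * Gamma (2 * N + 2)).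
    { replace (2 * N + 3) with (2 * N + 2 + 1) by ring. apply Gamma_succ; lra. }
    rewrite G1, G3, G4, G5. split.
    + rewrite G2.
      replace (PI / 2 * ((2 * N + 2) * ((2 * N + 1) * Gamma (2 * N + 1))))
        with ((2 * N + 2) * (2 * N + 1) * (PI / 2 * Gamma (2 * N + 1))) by ring.
      rewrite <- IHA. simpl pow. field. lra.
    + replace ((2 * N + 2) / (2 * N + 3) * W (S (2 * n)) * ((2 * N + 3) * ((2 * N + 2) * Gamma (2 * N + 2))))
        with ((2 * N + 2) * (2 * N + 2) * (W (S (2 * n)) * Gamma (2 * N + 2))) by (field; lra).
      rewrite IHB. simpl pow. ring.
Qed.

Lemma LG_int n : (1 <= n)%nat ->
  (ln 2 + ln PI) / 2 - / (12 * INR n) <= LG (INR n) <= (ln 2 + ln PI) / 2 + / (4 * INR n).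
Proof.
  intros Hn. destruct n as [|k]; [lia|].
  set (n := S k). set (N := INR n).
  assert (HN : 1 <= N) by (unfold N, n; rewrite S_INR; pose proof (pos_INR k); lra).
  destruct (W_closed n) as [A B]. fold N in A, B.
  destruct (W_pos (2 * n)) as [Wa Wb].
  pose proof PI2_pos as HPI.
  assert (H4 : 0 < 4 ^ n) by (apply pow_lt; lra).
  assert (GN1 : 0 < Gamma (N + 1)) by (apply Gamma_pos; lra).
  assert (GN : 0 < Gamma N) by (apply Gamma_pos; lra).
  assert (G2N : 0 < Gamma (2 * N)) by (apply Gamma_pos; lra).
  assert (G2N1 : 0 < Gamma (2 * N + 1)) by (apply Gamma_pos; lra).
  assert (G2N2 : 0 < Gamma (2 * N + 2)) by (apply Gamma_pos; lra).
  assert (lnA : ln (W (2 * n)) + N * ln 4 + 2 * ln (Gamma (N + 1)) = ln (PI / 2) + ln (Gamma (2 * N + 1))).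
  { rewrite <- ln_mult by lra. rewrite <- A.
    rewrite !ln_mult; try lra; try (apply Rmult_lt_0_compat; lra); try (apply pow_lt; lra).
    rewrite !ln_pow by lra. unfold N. simpl INR. ring. }
  assert (lnB : ln (W (S (2 * n))) + ln (Gamma (2 * N + 2)) = N * ln 4 + 2 * ln (Gamma (N + 1))).
  { rewrite <- ln_mult by lra. rewrite B.
    rewrite !ln_mult; try lra; try (apply pow_lt; lra).
    rewrite !ln_pow by lra. unfold N. simpl INR. ring. }
  assert (R1 : ln (W (S (2 * n))) <= ln (W (2 * n))).
  { apply ln_le; auto. apply W_decr. }
  assert (R2 : ln (W (2 * n)) <= ln (W (S (2 * n))) + ln (2 * N + 1) - ln (2 * N)).
  { replace (2 * n)%nat with (S (S (2 * k))) by (unfold n; lia).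
    pose proof (W_rec (S (2 * k))) as Rr.
    pose proof (W_decr (S (2 * k))) as Rd.
    destruct (W_pos (S (2 * k))) as [P1 P2].
    assert (EN : INR (S (S (S (2 * k)))) = 2 * N + 1).
    { unfold N, n. rewrite !S_INR, INR2. ring. }
    assert (EN2 : INR (S (S (2 * k))) = 2 * N).
    { unfold N, n. rewrite !S_INR, INR2. ring. }
    rewrite EN, EN2 in Rr.
    assert (E : W (S (2 * k)) = (2 * N + 1) / (2 * N) * W (S (S (S (2 * k))))).
    { apply Rmult_eq_reg_l with (2 * N); [|lra]. rewrite <- Rr. field. lra. }
    rewrite E in Rd.
    apply Rle_trans with (ln ((2 * N + 1) / (2 * N) * W (S (S (S (2 * k)))))).
    - apply ln_le; auto.
    - destruct (W_pos (S (S (2 * k)))) as [_ P3].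
      rewrite ln_mult, ln_div; try lra. apply Rdiv_lt_0_compat; lra. }
  rewrite (lnGamma_succ N) in lnA, lnB by lra.
  replace (2 * N + 2) with (2 * N + 1 + 1) in lnB by ring.
  rewrite (lnGamma_succ (2 * N + 1)) in lnB by lra.
  rewrite (lnGamma_succ (2 * N)) in lnA, lnB by lra.
  assert (L4 : ln 4 = 2 * ln 2).
  { replace 4 with (2 * 2) by ring. rewrite ln_mult by lra. ring. }
  assert (L2N : ln (2 * N) = ln 2 + ln N) by (apply ln_mult; lra).
  assert (LP : ln (PI / 2) = ln PI - ln 2) by (apply ln_div; lra).
  destruct (LG_tele N ltac:(lra) n) as [[T1 T2] _].
  fold N in T1, T2. replace (N + N) with (2 * N) in T1, T2 by ring.
  assert (Lq : ln (2 * N + 1) - ln (2 * N) <= / N / 2).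
  { rewrite <- ln_div by lra. pose proof (ln_le_sub1 ((2 * N + 1) / (2 * N))).
    replace ((2 * N + 1) / (2 * N) - 1) with (/ N / 2) in H by (field; lra). apply H.
    apply Rdiv_lt_0_compat; lra. }
  assert (I1 : / (12 * N) = / N / 12) by (field; lra).
  assert (I2 : / (12 * (2 * N)) = / N / 24) by (field; lra).
  assert (I3 : / (4 * N) = / N / 4) by (field; lra).
  rewrite I1, I2 in T2. rewrite I1, I3.
  unfold LG in *. rewrite L2N in *. rewrite L4, LP in *.
  split; lra.
Qed.

Lemma ln2_lt : ln 2 < 4 / 5.
Proof.
  assert (H : 2 < exp (4 / 5)).
  { replace (4 / 5) with (1/5 + 1/5 + 1/5 + 1/5) by field. rewrite !exp_plus.
    pose proof (exp_ineq1_le (1/5)) as H0. set (a := exp (1/5)) in *.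
    assert (H1 : 36/25 <= a * a) by nra.
    assert (H2 : 36/25 * (36/25) <= a * a * (a * a)) by (apply Rmult_le_compat; lra).
    lra. }
  rewrite <- (ln_exp (4 / 5)). apply ln_increasing; lra.
Qed.

Lemma floor_nat (x : R) : 1 < x -> exists k : nat, (1 <= k)%nat /\ INR k <= x < INR k + 1.
Proof.
  intros Hx. destruct (base_Int_part x) as [H1 H2].
  set (z := Int_part x) in *.
  assert (Hz : (0 < z)%Z) by (apply lt_IZR; lra).
  exists (Z.to_nat z).
  assert (E : INR (Z.to_nat z) = IZR z).
  { rewrite INR_IZR_INZ, Z2Nat.id; auto. lia. }
  rewrite E. split; [|lra].
  lia.
Qed.

Lemma LG_bounds nu : 1 < nu ->
  (ln 2 + ln PI) / 2 < LG nu < (ln 2 + ln PI) / 2 + (1 - ln 2) / 2.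
Proof.
  intros Hnu.
  destruct (floor_nat nu Hnu) as [k [Hk [Hk1 Hk2]]].
  set (th := nu - INR k).
  pose proof (dd_bounds nu ltac:(lra)) as [Hd _].
  pose proof ln2_lt as Hl2.
  set (eps := Rmin (dd nu * 12 / 7) (1 / 45)).
  assert (He : 0 < eps) by (unfold eps, Rmin; destruct Rle_dec; lra).
  destruct (archimed_cor1 eps He) as [m [Hm1 Hm2]].
  assert (HkR : 1 <= INR k) by (apply (le_INR 1); auto).
  assert (HmR : 0 < INR m) by (apply lt_0_INR; auto).
  set (M := INR (k + m)).
  assert (EM : M = INR k + INR m) by (unfold M; apply plus_INR).
  assert (HM : 1 <= M) by lra.
  assert (HiM : / M <= / INR m) by (apply Rinv_le_contravar; lra).
  assert (He1 : eps <= dd nu * 12 / 7) by apply Rmin_l.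
  assert (He2 : eps <= 1 / 45) by apply Rmin_r.
  destruct (LG_tele nu ltac:(lra) m) as [[T1 T2] T3].
  specialize (T3 ltac:(lia)).
  assert (Eq : nu + INR m = M + th) by (unfold th; lra).
  rewrite Eq in T1, T2, T3.
  pose proof (LG_sandwich M th HM ltac:(unfold th; lra)) as S.
  apply Rabs_le_between in S.
  pose proof (LG_int (k + m) ltac:(lia)) as [I1 I2]. fold M in I1, I2.
  assert (J1 : / (12 * M) = / M / 12) by (field; lra).
  assert (J2 : / (2 * M) = / M / 2) by (field; lra).
  assert (J3 : / (4 * M) = / M / 4) by (field; lra).
  assert (J4 : / (12 * nu) < / 12).
  { apply Rinv_lt_contravar; lra. }
  assert (J5 : 0 < / (12 * (M + th))).
  { apply Rinv_0_lt_compat. unfold th in *. lra. }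
  rewrite J1, J3 in *. rewrite J2 in S.
  split; lra.
Qed.

Theorem mainTheorem8 (nu : R) (Hnu : 1 < nu) :
  2 * nu / exp 1 * Rpower (2 / exp 1) (1 / (2 * nu - 1)) < c0 nu
  /\ c0 nu < 2 * nu / exp 1.
Proof.
  destruct (LG_bounds nu Hnu) as [Lo Hi].
  pose proof (Gamma_pos nu ltac:(lra)) as Hg.
  pose proof PI_RGT_0 as HPI.
  assert (Hs : 0 < sqrt PI) by (apply sqrt_lt_R0; lra).
  assert (Ls : ln (sqrt PI) = ln PI / 2).
  { assert (ln (sqrt PI * sqrt PI) = ln PI) by (rewrite sqrt_sqrt; lra).
    rewrite ln_mult in H by lra. lra. }
  set (m := 2 * nu - 1). assert (Hm : 0 < m) by (unfold m; lra).
  assert (Ec : c0 nu = 2 * exp (2 / m * (ln (Gamma nu) - ln PI / 2))).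
  { unfold c0, Rpower. fold m. rewrite ln_div by lra. rewrite Ls. reflexivity. }
  assert (Ee : 2 * nu / exp 1 = 2 * exp (ln nu - 1)).
  { unfold Rminus. rewrite exp_plus, exp_ln, exp_Ropp by lra. field.
    apply Rgt_not_eq, exp_pos. }
  assert (E2 : Rpower (2 / exp 1) (1 / m) = exp (1 / m * (ln 2 - 1))).
  { unfold Rpower. rewrite ln_div, ln_exp by (lra || apply exp_pos). reflexivity. }
  rewrite Ec, Ee, E2. unfold LG in Lo, Hi.
  split.
  - rewrite Rmult_assoc, <- exp_plus. apply Rmult_lt_compat_l; [lra|].
    apply exp_increasing.
    set (D := ln (Gamma nu) - ln PI / 2 - m / 2 * (ln nu - 1) - (ln 2 - 1) / 2).
    assert (HD : 0 < D) by (unfold D, m; lra).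
    assert (X : 2 / m * (ln (Gamma nu) - ln PI / 2) - (ln nu - 1 + 1 / m * (ln 2 - 1)) = 2 / m * D)
      by (unfold D; field; lra).
    assert (0 < 2 / m * D) by (apply Rmult_lt_0_compat; [apply Rdiv_lt_0_compat|]; lra).
    lra.
  - apply Rmult_lt_compat_l; [lra|]. apply exp_increasing.
    set (D := m / 2 * (ln nu - 1) - (ln (Gamma nu) - ln PI / 2)).
    assert (HD : 0 < D) by (unfold D, m; lra).
    assert (X : ln nu - 1 - 2 / m * (ln (Gamma nu) - ln PI / 2) = 2 / m * D)
      by (unfold D; field; lra).
    assert (0 < 2 / m * D) by (apply Rmult_lt_0_compat; [apply Rdiv_lt_0_compat|]; lra).
    lra.
Qed.
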